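(* Let $\mathbb{K}=\mathbb{R}$ or $\mathbb{C}$, let $(V,W_\ast)$ be a finite-dimensional $\mathbb{K}$-vector space with an increasing filtration, and let $\phi:A_1^\ast\to A_2^\ast$ be a morphism of cohomologically connected DGAs over $\mathbb{K}$ inducing isomorphisms on $0$-th and first cohomology and an injection on second cohomology. Then the functor $F_{gr}(\phi):F^{nil}_{gr}(A_1^\ast,V,W_\ast)\to F^{nil}_{gr}(A_2^\ast,V,W_\ast)$ is an equivalence of categories.
   Context: A DGA is cohomologically connected if $H^0\cong\mathbb{K}$. $W_k(\mathrm{End}(V))$ denotes endomorphisms $f$ with $f(W_iV)\subset W_{i+k}V$ for all $i$. The category $F^{nil}_{gr}(A^\ast,V,W_\ast)$ has objects $\omega\in A^1\otimes W_{-1}(\mathrm{End}(V))$ satisfying $d\omega+\frac12[\omega,\omega]=0$, and morphisms from $\omega_1$ to $\omega_2$ the elements $a\in\mathrm{Id}_V+A^0\otimes W_{-1}(\mathrm{End}(V))$ with $da+\omega_1a-a\omega_2=0$ (products combine the DGA product and composition in $\mathrm{End}(V)$). The functor $F_{gr}(\phi)$ applies $\phi\otimes\mathrm{id}$ to objects and morphisms. *)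

(* Defs.v *)
From mathcomp Require Import all_boot all_algebra.
From mathcomp Require Import Rstruct complex.
Unset Printing Implicit Defensive.
Import GRing.Theory.
Local Open Scope ring_scope.

Definition Kfld (b : bool) : fieldType :=
  if b then (Rdefinitions.R : fieldType) else (Rdefinitions.R[i] : fieldType).

(* A DGA is a K-algebra A = (+)_{n >= 0} A^n, the grading being given   *)
(* by a family of projections dga_proj n onto A^n, with a differential  *)
(* d of degree +1 satisfying d o d = 0 and the graded Leibniz rule.     *)
Record DGA (K : fieldType) := {
  dga_car :> algType K;
  dga_proj : nat -> dga_car -> dga_car;
  dga_d : dga_car -> dga_car;
  dga_proj_linear : forall n, linear (dga_proj n);
  dga_proj_proj : forall m n x,
      dga_proj n (dga_proj m x) = if m == n then dga_proj n x else 0;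
  dga_decomp : forall x, exists N, x = \sum_(i < N) dga_proj i x;
  dga_one : dga_proj 0 1 = 1;
  dga_mul : forall p q a b, dga_proj p a = a -> dga_proj q b = b ->
      dga_proj (p + q) (a * b) = a * b;
  dga_d_linear : linear dga_d;
  dga_d_deg : forall n a, dga_proj n a = a -> dga_proj n.+1 (dga_d a) = dga_d a;
  dga_dd : forall a, dga_d (dga_d a) = 0;
  dga_leibniz : forall p a b, dga_proj p a = a ->
      dga_d (a * b) = dga_d a * b + ((-1) ^+ p : K) *: (a * dga_d b)
}.
Arguments dga_car {K}.
Arguments dga_proj {K} d _ _.
Arguments dga_d {K} d _.

Definition homog {K} (A : DGA K) (n : nat) (x : A) : Prop := dga_proj A n x = x.
Definition cocycle {K} (A : DGA K) n (x : A) : Prop := homog A n x /\ dga_d A x = 0.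
Definition coboundary {K} (A : DGA K) n (x : A) : Prop :=
  match n with
  | 0 => x = 0
  | m.+1 => exists y, homog A m y /\ x = dga_d A y
  end.

(* H^0(A) = Z^0(A) is isomorphic to K as a K-vector space. *)
Definition cohom_connected {K} (A : DGA K) : Prop :=
  exists f : K^o -> A, linear f /\ injective f /\
    (forall c, cocycle A 0 (f c)) /\ (forall z, cocycle A 0 z -> exists c, f c = z).

Definition DGA_morphism {K} {A1 A2 : DGA K} (phi : A1 -> A2) : Prop :=
  [/\ linear phi, phi 1 = 1, (forall a b, phi (a * b) = phi a * phi b),
      (forall n a, homog A1 n a -> homog A2 n (phi a)) &
      (forall a, phi (dga_d A1 a) = dga_d A2 (phi a))].

Definition Hinj {K} {A1 A2 : DGA K} (phi : A1 -> A2) n : Prop :=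
  forall z, cocycle A1 n z -> coboundary A2 n (phi z) -> coboundary A1 n z.
Definition Hsurj {K} {A1 A2 : DGA K} (phi : A1 -> A2) n : Prop :=
  forall z, cocycle A2 n z -> exists y, cocycle A1 n y /\ coboundary A2 n (phi y - z).

(* Filtered vector space (V, W_* ) with V = K^n (row vectors); W i is a  *)
(* matrix whose row space is the subspace W_i V.                        *)
Definition filtration {K : fieldType} {n} (W : int -> 'M[K]_n) : Prop :=
  (forall i, (W i <= W (i + 1)%R)%MS) /\
  (exists a, (W a <= (0 : 'M[K]_n))%MS) /\ (exists b, ((1%:M : 'M[K]_n) <= W b)%MS).

(* W_k(End V): endomorphisms f (acting on row vectors, v |-> v *m f)    *)
(* with f(W_i V) contained in W_{i+k} V for all i.                      *)
Definition W_End {K : fieldType} {n} (W : int -> 'M[K]_n) (k : int) (f : 'M[K]_n) : Prop :=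
  forall i : int, (W i *m f <= W (i + k)%R)%MS.

(* A (x) End(V) is identified with matrices over A: a (x) f is the       *)
(* matrix with entries f i j *: a.                                      *)
Definition tens {K} (A : DGA K) {n} (a : A) (f : 'M[K]_n) : 'M[A]_n :=
  \matrix_(i, j) (f i j *: a).

Definition in_tens {K} (A : DGA K) {n} (p : nat) (S : 'M[K]_n -> Prop) (M : 'M[A]_n) : Prop :=
  exists k (a : 'I_k -> A) (f : 'I_k -> 'M[K]_n),
    (forall j, homog A p (a j) /\ S (f j)) /\ M = \sum_(j < k) tens A (a j) (f j).

Definition dmx {K} {A : DGA K} {n} (M : 'M[A]_n) : 'M[A]_n := map_mx (dga_d A) M.
Definition scalemxK {K} (A : DGA K) {n} (c : K) (M : 'M[A]_n) : 'M[A]_n :=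
  map_mx (fun x : A => c *: x) M.

Definition gbracket {K} {A : DGA K} {n} (p q : nat) (M N : 'M[A]_n) : 'M[A]_n :=
  M *m N - scalemxK A ((-1) ^+ (p * q)) (N *m M).

Definition Fobj {K} {A : DGA K} {n} (W : int -> 'M[K]_n) (w : 'M[A]_n) : Prop :=
  in_tens A 1 (W_End W (-1)) w /\
  dmx w + scalemxK A (2%:R^-1) (gbracket 1 1 w w) = 0.

Definition Fhom {K} {A : DGA K} {n} (W : int -> 'M[K]_n) (w1 w2 a : 'M[A]_n) : Prop :=
  (exists N, in_tens A 0 (W_End W (-1)) N /\ a = 1%:M + N) /\
  dmx a + w1 *m a - a *m w2 = 0.

(* Categories presented by predicates on a type of objects and a type   *)
(* of morphisms; composition is written in diagrammatic order.          *)
Record PCat := {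
  pc_ob : Type;
  pc_isob : pc_ob -> Prop;
  pc_mor : Type;
  pc_ishom : pc_ob -> pc_ob -> pc_mor -> Prop;
  pc_comp : pc_mor -> pc_mor -> pc_mor;
  pc_id : pc_ob -> pc_mor
}.
Arguments pc_isob {p} _.
Arguments pc_ishom {p} _ _ _.
Arguments pc_comp {p} _ _.
Arguments pc_id {p} _.

Definition Fcat {K} (A : DGA K) {n} (W : int -> 'M[K]_n) : PCat := {|
  pc_ob := 'M[A]_n;
  pc_isob := Fobj W;
  pc_mor := 'M[A]_n;
  pc_ishom := Fhom W;
  pc_comp := fun a b => a *m b;
  pc_id := fun _ => 1%:M
|}.

Definition is_functor {C D : PCat} (Fo : pc_ob C -> pc_ob D)
    (Fm : pc_ob C -> pc_ob C -> pc_mor C -> pc_mor D) : Prop :=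
  [/\ (forall x, pc_isob x -> pc_isob (Fo x)),
      (forall x y f, pc_isob x -> pc_isob y -> pc_ishom x y f ->
          pc_ishom (Fo x) (Fo y) (Fm x y f)),
      (forall x, pc_isob x -> Fm x x (pc_id x) = pc_id (Fo x)) &
      (forall x y z f g, pc_isob x -> pc_isob y -> pc_isob z ->
          pc_ishom x y f -> pc_ishom y z g ->
          Fm x z (pc_comp f g) = pc_comp (Fm x y f) (Fm y z g))].

Definition is_nat_iso {C D : PCat} (Fo Go : pc_ob C -> pc_ob D)
    (Fm Gm : pc_ob C -> pc_ob C -> pc_mor C -> pc_mor D)
    (eta : pc_ob C -> pc_mor D) : Prop :=
  (forall x, pc_isob x -> pc_ishom (Fo x) (Go x) (eta x) /\
     exists e', pc_ishom (Go x) (Fo x) e' /\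
       pc_comp (eta x) e' = pc_id (Fo x) /\ pc_comp e' (eta x) = pc_id (Go x)) /\
  (forall x y f, pc_isob x -> pc_isob y -> pc_ishom x y f ->
     pc_comp (Fm x y f) (eta y) = pc_comp (eta x) (Gm x y f)).

Definition is_equivalence {C D : PCat} (Fo : pc_ob C -> pc_ob D)
    (Fm : pc_ob C -> pc_ob C -> pc_mor C -> pc_mor D) : Prop :=
  is_functor Fo Fm /\
  exists (Go : pc_ob D -> pc_ob C) (Gm : pc_ob D -> pc_ob D -> pc_mor D -> pc_mor C)
         (eta : pc_ob C -> pc_mor C) (eps : pc_ob D -> pc_mor D),
    [/\ is_functor Go Gm,
        is_nat_iso (fun x => x) (fun x => Go (Fo x))
                   (fun _ _ f => f) (fun x y f => Gm (Fo x) (Fo y) (Fm x y f)) eta &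
        is_nat_iso (fun y => Fo (Go y)) (fun y => y)
                   (fun y y' g => Fm (Go y) (Go y') (Gm y y' g)) (fun _ _ g => g) eps].

(* Main.v *)
Require Import Defs.
From mathcomp Require Import all_boot all_algebra.
From mathcomp Require Import Rstruct complex.
From mathcomp Require Import zify.
From Stdlib Require Import Classical IndefiniteDescription.
Import GRing.Theory Num.Theory.
Local Open Scope ring_scope.
Set Implicit Arguments.
Unset Strict Implicit.

Section DGAFacts.
Variables (K : fieldType) (A : DGA K).

Lemma dD (x y : A) : dga_d A (x + y) = dga_d A x + dga_d A y.
Proof. by have := @dga_d_linear _ A 1 x y; rewrite !scale1r. Qed.
Lemma d0 : dga_d A 0 = 0.
Proof. by apply/(addrI (dga_d A 0)); rewrite -dD !addr0. Qed.
Lemma dZ (c : K) (x : A) : dga_d A (c *: x) = c *: dga_d A x.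
Proof. by have := @dga_d_linear _ A c x 0; rewrite !addr0 d0 addr0. Qed.
Lemma dN (x : A) : dga_d A (- x) = - dga_d A x.
Proof. by rewrite -scaleN1r dZ scaleN1r. Qed.
Lemma dB (x y : A) : dga_d A (x - y) = dga_d A x - dga_d A y.
Proof. by rewrite dD dN. Qed.
Lemma d_sum I (r : seq I) (P : pred I) (F : I -> A) :
  dga_d A (\sum_(i <- r | P i) F i) = \sum_(i <- r | P i) dga_d A (F i).
Proof. by elim/big_rec2: _ => [|i y1 y2 _ <-]; rewrite ?d0 ?dD. Qed.

Lemma pD p (x y : A) : dga_proj A p (x + y) = dga_proj A p x + dga_proj A p y.
Proof. by have := @dga_proj_linear _ A p 1 x y; rewrite !scale1r. Qed.
Lemma p0 p : dga_proj A p 0 = 0.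
Proof. by apply/(addrI (dga_proj A p 0)); rewrite -pD !addr0. Qed.
Lemma pZ p (c : K) (x : A) : dga_proj A p (c *: x) = c *: dga_proj A p x.
Proof. by have := @dga_proj_linear _ A p c x 0; rewrite !addr0 p0 addr0. Qed.
Lemma pN p (x : A) : dga_proj A p (- x) = - dga_proj A p x.
Proof. by rewrite -scaleN1r pZ scaleN1r. Qed.

Lemma homog0 p : homog A p 0.
Proof. exact: p0. Qed.
Lemma homogD p x y : homog A p x -> homog A p y -> homog A p (x + y).
Proof. by rewrite /homog pD => -> ->. Qed.
Lemma homogZ p c x : homog A p x -> homog A p (c *: x).
Proof. by rewrite /homog pZ => ->. Qed.
Lemma homogN p x : homog A p x -> homog A p (- x).
Proof. by rewrite /homog pN => ->. Qed.
Lemma homogB p x y : homog A p x -> homog A p y -> homog A p (x - y).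
Proof. by move=> hx hy; apply: homogD => //; apply: homogN. Qed.
Lemma homog_sum p I (r : seq I) (P : pred I) (F : I -> A) :
  (forall i, P i -> homog A p (F i)) -> homog A p (\sum_(i <- r | P i) F i).
Proof. by move=> h; elim/big_rec: _ => [|i x Pi hx]; [apply: homog0| apply: homogD; auto]. Qed.
Lemma homogM p q x y : homog A p x -> homog A q y -> homog A (p + q) (x * y).
Proof. by move=> hx hy; apply: (@dga_mul _ A p q x y hx hy). Qed.
Lemma homog1 : homog A 0 1.
Proof. exact: @dga_one _ A. Qed.
Lemma homog_d p x : homog A p x -> homog A p.+1 (dga_d A x).
Proof. by move=> hx; apply: (@dga_d_deg _ A p x hx). Qed.

Lemma d1 : dga_d A 1 = 0.
Proof.
have := @dga_leibniz _ A 0 1 1 homog1; rewrite !mulr1 expr0 scale1r mul1r => h.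
by apply/(addrI (dga_d A 1)); rewrite addr0 -h.
Qed.

End DGAFacts.

Section MatA.
Variables (K : fieldType) (A : DGA K) (n : nat).
Implicit Types (M N : 'M[A]_n) (a b : A) (f g : 'M[K]_n).

Definition hmx p M := forall i j, homog A p (M i j).

Lemma hmx0 p : hmx p 0.
Proof. by move=> i j; rewrite mxE; apply: homog0. Qed.
Lemma hmxD p M N : hmx p M -> hmx p N -> hmx p (M + N).
Proof. by move=> hM hN i j; rewrite mxE; apply: homogD. Qed.
Lemma hmxN p M : hmx p M -> hmx p (- M).
Proof. by move=> hM i j; rewrite mxE; apply: homogN. Qed.
Lemma hmxB p M N : hmx p M -> hmx p N -> hmx p (M - N).
Proof. by move=> hM hN; apply: hmxD => //; apply: hmxN. Qed.
Lemma hmx1 : hmx 0 (1%:M).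
Proof. by move=> i j; rewrite mxE; case: (i == j); [apply: homog1|apply: homog0]. Qed.
Lemma hmxM p q M N : hmx p M -> hmx q N -> hmx (p + q) (M *m N).
Proof. by move=> hM hN i j; rewrite mxE; apply: homog_sum => k _; apply: homogM. Qed.
Lemma hmx_dmx p M : hmx p M -> hmx p.+1 (dmx M).
Proof. by move=> hM i j; rewrite mxE; apply: homog_d. Qed.

Lemma dmxD M N : dmx (M + N) = dmx M + dmx N.
Proof. by apply/matrixP=> i j; rewrite !mxE dD. Qed.
Lemma dmxN M : dmx (- M) = - dmx M.
Proof. by apply/matrixP=> i j; rewrite !mxE dN. Qed.
Lemma dmxB M N : dmx (M - N) = dmx M - dmx N.
Proof. by rewrite dmxD dmxN. Qed.
Lemma dmx0 : dmx (0 : 'M[A]_n) = 0.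
Proof. by apply/matrixP=> i j; rewrite !mxE d0. Qed.
Lemma dmx1 : dmx (1%:M : 'M[A]_n) = 0.
Proof. by apply/matrixP=> i j; rewrite !mxE; case: (i == j); rewrite ?d1 ?d0. Qed.
Lemma dmxK M : dmx (dmx M) = 0.
Proof. by apply/matrixP=> i j; rewrite !mxE dga_dd. Qed.

Lemma dmxM0 M N : hmx 0 M -> dmx (M *m N) = dmx M *m N + M *m dmx N.
Proof.
move=> hM; apply/matrixP=> i k; rewrite !mxE d_sum -big_split /=.
by apply: eq_bigr => j _; rewrite !mxE (@dga_leibniz _ _ _ _ _ (hM i j)) expr0 scale1r.
Qed.
Lemma dmxM1 M N : hmx 1 M -> dmx (M *m N) = dmx M *m N - M *m dmx N.
Proof.
move=> hM; apply/matrixP=> i k; rewrite !mxE d_sum -sumrB /=.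
by apply: eq_bigr => j _; rewrite !mxE (@dga_leibniz _ _ _ _ _ (hM i j)) expr1 scaleN1r.
Qed.

Lemma scalemxKE (c : K) M : scalemxK A c M = (c%:A : A) *: M.
Proof. by apply/matrixP=> i j; rewrite !mxE -scalerAl mul1r. Qed.

Lemma tensE a f i j : tens A a f i j = f i j *: a.
Proof. by rewrite mxE. Qed.
Lemma tensM a b f g : tens A a f *m tens A b g = tens A (a * b) (f *m g).
Proof.
apply/matrixP=> i k; rewrite !mxE scaler_suml; apply: eq_bigr => j _.
by rewrite !mxE -scalerAl -scalerAr scalerA.
Qed.
Lemma dmx_tens a f : dmx (tens A a f) = tens A (dga_d A a) f.
Proof. by apply/matrixP=> i j; rewrite !mxE dZ. Qed.
Lemma tens0r a : tens A a (0 : 'M[K]_n) = 0.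
Proof. by apply/matrixP=> i j; rewrite !mxE scale0r. Qed.
Lemma tensDl a b f : tens A (a + b) f = tens A a f + tens A b f.
Proof. by apply/matrixP=> i j; rewrite !mxE scalerDr. Qed.
Lemma tensNl a f : tens A (- a) f = - tens A a f.
Proof. by apply/matrixP=> i j; rewrite !mxE scalerN. Qed.
Lemma tensBl a b f : tens A (a - b) f = tens A a f - tens A b f.
Proof. by rewrite tensDl tensNl. Qed.
Lemma tens_suml I (r : seq I) (P : pred I) (F : I -> A) f :
  tens A (\sum_(i <- r | P i) F i) f = \sum_(i <- r | P i) tens A (F i) f.
Proof.
elim/big_rec2: _ => [|i y1 y2 _ <-]; last by rewrite tensDl.
by apply/matrixP=> i j; rewrite !mxE scaler0.
Qed.
Lemma tensDr a f g : tens A a (f + g) = tens A a f + tens A a g.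
Proof. by apply/matrixP=> i j; rewrite !mxE scalerDl. Qed.
Lemma tensNr a f : tens A a (- f) = - tens A a f.
Proof. by apply/matrixP=> i j; rewrite !mxE scaleNr. Qed.
Lemma tensBr a f g : tens A a (f - g) = tens A a f - tens A a g.
Proof. by rewrite tensDr tensNr. Qed.
Lemma tensZr a (c : K) f : tens A a (c *: f) = tens A (c *: a) f.
Proof. by apply/matrixP=> i j; rewrite !mxE scalerA mulrC. Qed.
Lemma tens_sumr I (r : seq I) (P : pred I) (F : I -> 'M[K]_n) a :
  tens A a (\sum_(i <- r | P i) F i) = \sum_(i <- r | P i) tens A a (F i).
Proof.
elim/big_rec2: _ => [|i y1 y2 _ <-]; last by rewrite tensDr.
by apply: tens0r.
Qed.
Lemma hmx_tens p a f : homog A p a -> hmx p (tens A a f).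
Proof. by move=> ha i j; rewrite mxE; apply: homogZ. Qed.
Lemma scalemxK_tens (c : K) a f : scalemxK A c (tens A a f) = tens A (c *: a) f.
Proof. by apply/matrixP=> i j; rewrite !mxE !scalerA mulrC. Qed.

Section InTens.
Variable S : 'M[K]_n -> Prop.

Lemma in_tens0 p : in_tens A p S 0.
Proof. by exists 0, (fun _ => 0), (fun _ => 0); split=> [[]//|]; rewrite big_ord0. Qed.

Lemma in_tens1 p a f : homog A p a -> S f -> in_tens A p S (tens A a f).
Proof. by move=> ha hf; exists 1, (fun _ => a), (fun _ => f); split=> //; rewrite big_ord1. Qed.

Lemma in_tensD p M N : in_tens A p S M -> in_tens A p S N -> in_tens A p S (M + N).
Proof.
move=> [k1 [a1 [f1 [h1 ->]]]] [k2 [a2 [f2 [h2 ->]]]].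
exists (k1 + k2)%N, (fun j => match split j with inl i => a1 i | inr i => a2 i end),
  (fun j => match split j with inl i => f1 i | inr i => f2 i end).
split=> [j|]; first by case: (split j).
rewrite big_split_ord /=; congr (_ + _); apply: eq_bigr => i _.
  by change (lshift k2 i) with (unsplit (inl _ i : 'I_k1 + 'I_k2)); rewrite unsplitK.
by change (rshift k1 i) with (unsplit (inr _ i : 'I_k1 + 'I_k2)); rewrite unsplitK.
Qed.

Lemma in_tens_sum p I (r : seq I) (P : pred I) (F : I -> 'M[A]_n) :
  (forall i, P i -> in_tens A p S (F i)) -> in_tens A p S (\sum_(i <- r | P i) F i).
Proof.
by move=> h; elim/big_rec: _ => [|i x Pi hx]; [apply: in_tens0|apply: in_tensD; auto].
Qed.

Lemma in_tensN p M : in_tens A p S M -> in_tens A p S (- M).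
Proof.
move=> [k [a [f [h ->]]]]; exists k, (fun j => - a j), f; split.
  by move=> j; case: (h j) => ? ?; split=> //; apply: homogN.
by rewrite -sumrN; apply: eq_bigr => j _; rewrite tensNl.
Qed.
Lemma in_tensB p M N : in_tens A p S M -> in_tens A p S N -> in_tens A p S (M - N).
Proof. by move=> hM hN; apply: in_tensD => //; apply: in_tensN. Qed.

Lemma in_tens_scale p (c : K) M : in_tens A p S M -> in_tens A p S (scalemxK A c M).
Proof.
move=> [k [a [f [h ->]]]]; exists k, (fun j => c *: a j), f; split.
  by move=> j; case: (h j) => ? ?; split=> //; apply: homogZ.
apply/matrixP=> u v; rewrite !mxE !summxE scaler_sumr; apply: eq_bigr => j _.
by rewrite !mxE !scalerA mulrC.
Qed.

Lemma in_tens_dmx p M : in_tens A p S M -> in_tens A p.+1 S (dmx M).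
Proof.
move=> [k [a [f [h ->]]]]; exists k, (fun j => dga_d A (a j)), f; split.
  by move=> j; case: (h j) => ? ?; split=> //; apply: homog_d.
apply/matrixP=> u v; rewrite !mxE !summxE d_sum; apply: eq_bigr => j _.
by rewrite !mxE dZ.
Qed.

Lemma in_tens_hmx p M : in_tens A p S M -> hmx p M.
Proof.
move=> [k [a [f [h ->]]]] u v; rewrite summxE; apply: homog_sum => j _.
by rewrite mxE; apply: homogZ; case: (h j).
Qed.

End InTens.

Lemma in_tens_mono (S1 S2 : 'M[K]_n -> Prop) p M :
  (forall f, S1 f -> S2 f) -> in_tens A p S1 M -> in_tens A p S2 M.
Proof.
move=> hS [k [a [f [h ->]]]]; exists k, a, f; split=> // j.
by case: (h j) => ? ?; split; auto.
Qed.

Lemma in_tensM (S1 S2 S3 : 'M[K]_n -> Prop) p q M N :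
  (forall f g, S1 f -> S2 g -> S3 (f *m g)) ->
  in_tens A p S1 M -> in_tens A q S2 N -> in_tens A (p + q) S3 (M *m N).
Proof.
move=> hS [k1 [a1 [f1 [h1 ->]]]] [k2 [a2 [f2 [h2 ->]]]].
rewrite mulmx_suml; apply: in_tens_sum => i _; rewrite mulmx_sumr.
apply: in_tens_sum => j _; rewrite tensM; case: (h1 i) => ? ?; case: (h2 j) => ? ?.
by apply: in_tens1; [apply: homogM|apply: hS].
Qed.

Lemma in_tens_zero p M : in_tens A p (fun f => f = 0) M -> M = 0.
Proof.
move=> [k [a [f [h ->]]]]; apply: big1 => j _.
by case: (h j) => _ ->; apply: tens0r.
Qed.

End MatA.

Lemma vspace_of_pred (K : fieldType) (vT : vectType K) (P : vT -> Prop) :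
  P 0 -> (forall u v, P u -> P v -> P (u + v)) -> (forall c v, P v -> P (c *: v)) ->
  exists U : {vspace vT}, forall v, v \in U <-> P v.
Proof.
move=> P0 PD PZ.
suff H : forall m (U : {vspace vT}), (\dim {:vT} - \dim U <= m)%N ->
    (forall v, v \in U -> P v) -> exists U' : {vspace vT}, forall v, v \in U' <-> P v.
  by apply: (H _ 0%VS (leqnn _)) => v; rewrite memv0 => /eqP ->.
elim=> [|m IH] U hm hU.
  exists U => v; split; first exact: hU.
  move=> _; have : (U == fullv) by rewrite eqEdim subvf /= -subn_eq0 -leqn0.
  by move/eqP ->; rewrite memvf.
case: (classic (forall v, P v -> v \in U)) => [hall|].
  by exists U => v; split; [apply: hU|apply: hall].
move=> /not_all_ex_not [g hg]; have [Pg gU] := imply_to_and _ _ hg.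
have gU' : g \notin U by apply/negP.
apply: (IH (U + <[g]>)%VS).
  have hlt : (\dim U < \dim (U + <[g]>))%N.
    rewrite ltnNge; apply/negP => hle.
    have : U == (U + <[g]>)%VS by rewrite eqEdim addvSl hle.
    move/eqP => hUe; move: gU'; rewrite hUe; case/negP.
    by rewrite -{1}[g]add0r; apply: memv_add; [apply: mem0v|apply: memv_line].
  have hle : (\dim (U + <[g]>) <= \dim {:vT})%N by apply: dimvS; apply: subvf.
  by move: hm hlt hle; lia.
move=> v /memv_addP [u hu [w /vlineP [c ->] ->]].
by apply: PD; [apply: hU|apply: PZ].
Qed.

Definition lamL (K : fieldType) n (L f : 'M[K]_n) : K := \sum_u \sum_v L u v * f u v.

Lemma decomp_gen (K : fieldType) n (P0 P1 : 'M[K]_n -> Prop) :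
  P0 0 -> (forall u v, P0 u -> P0 v -> P0 (u + v)) -> (forall c v, P0 v -> P0 (c *: v)) ->
  P1 0 -> (forall u v, P1 u -> P1 v -> P1 (u + v)) -> (forall c v, P1 v -> P1 (c *: v)) ->
  (forall f, P1 f -> P0 f) ->
  exists r (e : 'I_r -> 'M[K]_n) (L : 'I_r -> 'M[K]_n),
    [/\ forall i, P0 (e i),
        forall i f, P1 f -> lamL (L i) f = 0 &
        forall f, P0 f -> P1 (f - \sum_i lamL (L i) f *: e i)].
Proof.
move=> a0 aD aZ b0 bD bZ h10.
have [U0 hU0] := vspace_of_pred a0 aD aZ.
have [U1 hU1] := vspace_of_pred b0 bD bZ.
pose pi := addv_pi1 U0 U1.
pose lam (i : 'I_(\dim U0)) (f : 'M[K]_n) : K := coord (vbasis U0) i (pi f).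
have lamE i f : lamL (\matrix_(u, v) lam i (delta_mx u v)) f = lam i f.
  rewrite /lam {2}(matrix_sum_delta f) raddf_sum raddf_sum /lamL.
  apply: eq_bigr => u _; rewrite raddf_sum raddf_sum; apply: eq_bigr => v _.
  by rewrite mxE /= !linearZ /= mulrC.
exists (\dim U0), (fun i => (vbasis U0)`_i), (fun i => \matrix_(u, v) lam i (delta_mx u v)).
split.
- move=> i; apply/hU0; apply: vbasis_mem; apply: mem_nth; by rewrite size_tuple.
- move=> i f hf; rewrite lamE /lam /pi.
  have hf1 : f \in U1 by apply/hU1.
  have : addv_pi1 U0 U1 f + addv_pi2 U0 U1 f = f.
    by apply: addv_pi1_pi2; apply: (subvP (addvSr U0 U1)).
  rewrite (addv_pi2_id _ hf1) => /(canRL (addrK f)); rewrite subrr => ->.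
  by rewrite linear0.
- move=> f hf; under eq_bigr do rewrite lamE.
  have hpi : pi f \in U0 by apply: memv_pi1.
  rewrite /lam -(coord_vbasis hpi).
  have hf0 : f \in U0 by apply/hU0.
  have : addv_pi1 U0 U1 f + addv_pi2 U0 U1 f = f.
    by apply: addv_pi1_pi2; apply: (subvP (addvSl U0 U1)).
  move=> h; have -> : f - pi f = addv_pi2 U0 U1 f by rewrite -{1}h addrAC subrr add0r.
  by apply/hU1; apply: memv_pi2.
Qed.

Section Filt.
Variables (K : fieldType) (n : nat) (W : int -> 'M[K]_n).
Hypothesis hW : filtration W.

Lemma Wmono i j : (i <= j)%R -> (W i <= W j)%MS.
Proof.
move=> hij.
have step : forall m : nat, (W i <= W (i + m%:Z))%MS.
  elim=> [|m IH]; first by rewrite addr0 submx_refl.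
  apply: submx_trans IH _.
  have -> : i + (m.+1)%:Z = (i + m%:Z) + 1 by lia.
  by apply: hW.1.
have -> : j = i + (`|j - i|%N)%:Z by lia.
exact: step.
Qed.

Lemma WEnd0 k : W_End W k 0.
Proof. by move=> i; rewrite mulmx0 sub0mx. Qed.
Lemma WEndD k f g : W_End W k f -> W_End W k g -> W_End W k (f + g).
Proof. by move=> hf hg i; rewrite mulmxDr addmx_sub. Qed.
Lemma WEndZ k c f : W_End W k f -> W_End W k (c *: f).
Proof. by move=> hf i; rewrite -scalemxAr scalemx_sub. Qed.
Lemma WEndM k1 k2 f g : W_End W k1 f -> W_End W k2 g -> W_End W (k1 + k2) (f *m g).
Proof.
move=> hf hg i; rewrite mulmxA; apply: submx_trans (submxMr _ (hf i)) _.
by rewrite addrA; apply: hg.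
Qed.
Lemma WEnd_mono k1 k2 f : (k1 <= k2)%R -> W_End W k1 f -> W_End W k2 f.
Proof.
move=> hk hf i; apply: submx_trans (hf i) _; apply: Wmono; lia.
Qed.

Definition Sk (k : nat) := W_End W (- (k%:Z)).

Lemma Sk_mono k l f : (k <= l)%N -> Sk l f -> Sk k f.
Proof. by move=> hkl; apply: WEnd_mono; lia. Qed.
Lemma SkM k l f g : Sk k f -> Sk l g -> Sk (k + l) (f *m g).
Proof. by move=> hf hg; have := WEndM hf hg; rewrite /Sk; congr W_End; lia. Qed.

Lemma Sk_bound : exists L : nat, forall k f, (L <= k)%N -> Sk k f -> f = 0.
Proof.
case: hW => _ [[a ha] [b hb]].
exists (`|b - a|%N) => k f hk hf.
have h1 : (f <= W (b - k%:Z))%MS.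
  by apply: submx_trans (hf b); rewrite -{1}[f]mul1mx; apply: submxMr.
have h2 : (W (b - k%:Z) <= W a)%MS by apply: Wmono; lia.
by apply/eqP; rewrite -submx0; apply: submx_trans h1 (submx_trans h2 ha).
Qed.

Lemma decompS k : exists r (e : 'I_r -> 'M[K]_n) (L : 'I_r -> 'M[K]_n),
    [/\ forall i, Sk k (e i),
        forall i f, Sk k.+1 f -> lamL (L i) f = 0 &
        forall f, Sk k f -> Sk k.+1 (f - \sum_i lamL (L i) f *: e i)].
Proof.
apply: decomp_gen; try exact: WEnd0; try (by move=> *; apply: WEndD);
  try (by move=> *; apply: WEndZ).
by move=> f; apply: Sk_mono.
Qed.

End Filt.

Section Phi.
Variables (K : fieldType) (A1 A2 : DGA K) (phi : A1 -> A2) (n : nat).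
Hypothesis hphi : DGA_morphism phi.

Lemma phi_lin : linear phi. Proof. by case: hphi. Qed.
Lemma phiD x y : phi (x + y) = phi x + phi y.
Proof. by have := phi_lin 1 x y; rewrite !scale1r. Qed.
Lemma phi0 : phi 0 = 0.
Proof. by apply/(addrI (phi 0)); rewrite -phiD !addr0. Qed.
Lemma phiZ (c : K) x : phi (c *: x) = c *: phi x.
Proof. by have := phi_lin c x 0; rewrite !addr0 phi0 addr0. Qed.
Lemma phiN x : phi (- x) = - phi x.
Proof. by rewrite -scaleN1r phiZ scaleN1r. Qed.
Lemma phi_sum I (r : seq I) (P : pred I) (F : I -> A1) :
  phi (\sum_(i <- r | P i) F i) = \sum_(i <- r | P i) phi (F i).
Proof. by elim/big_rec2: _ => [|i y1 y2 _ <-]; rewrite ?phi0 ?phiD. Qed.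
Lemma phiM x y : phi (x * y) = phi x * phi y. Proof. by case: hphi. Qed.
Lemma phi1 : phi 1 = 1. Proof. by case: hphi. Qed.
Lemma phi_d x : phi (dga_d A1 x) = dga_d A2 (phi x). Proof. by case: hphi. Qed.
Lemma phi_homog p x : homog A1 p x -> homog A2 p (phi x). Proof. by case: hphi => _ _ _ h _; apply: h. Qed.

Implicit Types (M N : 'M[A1]_n).
Local Notation Phi := (map_mx phi).

Lemma mapD M N : Phi (M + N) = Phi M + Phi N.
Proof. by apply/matrixP=> i j; rewrite !mxE phiD. Qed.
Lemma mapN M : Phi (- M) = - Phi M.
Proof. by apply/matrixP=> i j; rewrite !mxE phiN. Qed.
Lemma mapB M N : Phi (M - N) = Phi M - Phi N.
Proof. by rewrite mapD mapN. Qed.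
Lemma map0 : Phi (0 : 'M[A1]_n) = 0.
Proof. by apply/matrixP=> i j; rewrite !mxE phi0. Qed.
Lemma map1 : Phi (1%:M : 'M[A1]_n) = 1%:M.
Proof. by apply/matrixP=> i j; rewrite !mxE; case: (i == j); rewrite ?phi1 ?phi0. Qed.
Lemma mapM M N : Phi (M *m N) = Phi M *m Phi N.
Proof.
apply/matrixP=> i j; rewrite !mxE phi_sum; apply: eq_bigr => k _.
by rewrite !mxE phiM.
Qed.
Lemma map_dmx M : Phi (dmx M) = dmx (Phi M).
Proof. by apply/matrixP=> i j; rewrite !mxE phi_d. Qed.
Lemma map_tens a (f : 'M[K]_n) : Phi (tens A1 a f) = tens A2 (phi a) f.
Proof. by apply/matrixP=> i j; rewrite !mxE phiZ. Qed.
Lemma map_scale (c : K) M : Phi (scalemxK A1 c M) = scalemxK A2 c (Phi M).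
Proof. by apply/matrixP=> i j; rewrite !mxE phiZ. Qed.
Lemma in_tens_map p S M : in_tens A1 p S M -> in_tens A2 p S (Phi M).
Proof.
move=> [k [a [f [h ->]]]]; exists k, (fun j => phi (a j)), f; split.
  by move=> j; case: (h j) => ? ?; split=> //; apply: phi_homog.
apply/matrixP=> u v; rewrite !mxE !summxE phi_sum; apply: eq_bigr => j _.
by rewrite !mxE phiZ.
Qed.

End Phi.

Section Lam.
Variables (K : fieldType) (A : DGA K) (n : nat).
Implicit Types (M N : 'M[A]_n) (L f : 'M[K]_n).

Definition LamA L M : A := \sum_u \sum_v L u v *: M u v.

Lemma LamA_D L M N : LamA L (M + N) = LamA L M + LamA L N.
Proof.
rewrite /LamA -big_split; apply: eq_bigr => u _; rewrite -big_split; apply: eq_bigr => v _.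
by rewrite mxE scalerDr.
Qed.
Lemma LamA_0 L : LamA L 0 = 0.
Proof. by apply/(addrI (LamA L 0)); rewrite -LamA_D !addr0. Qed.
Lemma LamA_N L M : LamA L (- M) = - LamA L M.
Proof. by apply/(addrI (LamA L M)); rewrite -LamA_D !subrr LamA_0. Qed.
Lemma LamA_B L M N : LamA L (M - N) = LamA L M - LamA L N.
Proof. by rewrite LamA_D LamA_N. Qed.
Lemma LamA_sum L I (r : seq I) (P : pred I) (F : I -> 'M[A]_n) :
  LamA L (\sum_(i <- r | P i) F i) = \sum_(i <- r | P i) LamA L (F i).
Proof. by elim/big_rec2: _ => [|i y1 y2 _ <-]; rewrite ?LamA_0 ?LamA_D. Qed.
Lemma LamA_tens L a f : LamA L (tens A a f) = lamL L f *: a.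
Proof.
rewrite /LamA /lamL scaler_suml; apply: eq_bigr => u _; rewrite scaler_suml.
by apply: eq_bigr => v _; rewrite mxE scalerA.
Qed.
Lemma LamA_dmx L M : LamA L (dmx M) = dga_d A (LamA L M).
Proof.
rewrite /LamA d_sum; apply: eq_bigr => u _; rewrite d_sum; apply: eq_bigr => v _.
by rewrite mxE dZ.
Qed.
Lemma LamA_homog L p M : hmx p M -> homog A p (LamA L M).
Proof. by move=> h; apply: homog_sum => u _; apply: homog_sum => v _; apply: homogZ. Qed.

Lemma LamA_vanish (S : 'M[K]_n -> Prop) L p M :
  (forall f, S f -> lamL L f = 0) -> in_tens A p S M -> LamA L M = 0.
Proof.
move=> hS [k [a [f [h ->]]]]; rewrite LamA_sum; apply: big1 => j _.
by rewrite LamA_tens; case: (h j) => _ /hS ->; rewrite scale0r.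
Qed.

Lemma decompA (S0 S1 : 'M[K]_n -> Prop) r (e : 'I_r -> 'M[K]_n) (L : 'I_r -> 'M[K]_n) p M :
  (forall f, S0 f -> S1 (f - \sum_i lamL (L i) f *: e i)) ->
  in_tens A p S0 M -> in_tens A p S1 (M - \sum_i tens A (LamA (L i) M) (e i)).
Proof.
move=> hS [k [a [f [h ->]]]].
have -> : \sum_i tens A (LamA (L i) (\sum_(j < k) tens A (a j) (f j))) (e i) =
    \sum_(j < k) tens A (a j) (\sum_i lamL (L i) (f j) *: e i).
  under eq_bigr do rewrite LamA_sum tens_suml.
  rewrite exchange_big /=; apply: eq_bigr => j _; rewrite tens_sumr.
  by apply: eq_bigr => i _; rewrite LamA_tens tensZr.
rewrite -sumrB; apply: in_tens_sum => j _; rewrite -tensBr.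
by case: (h j) => ? ?; apply: in_tens1 => //; apply: hS.
Qed.

End Lam.

Lemma tens0l (K : fieldType) (A : DGA K) n (f : 'M[K]_n) : tens A 0 f = 0.
Proof. by apply/matrixP=> i j; rewrite !mxE scaler0. Qed.

Lemma dmx_sum (K : fieldType) (A : DGA K) n I (r : seq I) (P : pred I) (F : I -> 'M[A]_n) :
  dmx (\sum_(i <- r | P i) F i) = \sum_(i <- r | P i) dmx (F i).
Proof. by elim/big_rec2: _ => [|i y1 y2 _ <-]; rewrite ?dmx0 ?dmxD. Qed.

Lemma map_sum (K : fieldType) (A1 A2 : DGA K) (phi : A1 -> A2) n (hphi : DGA_morphism phi)
  I (r : seq I) (P : pred I) (F : I -> 'M[A1]_n) :
  map_mx phi (\sum_(i <- r | P i) F i) = \sum_(i <- r | P i) map_mx phi (F i).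
Proof. by elim/big_rec2: _ => [|i y1 y2 _ <-]; rewrite ?map0 ?mapD. Qed.

Lemma LamA_map (K : fieldType) (A1 A2 : DGA K) (phi : A1 -> A2) n (hphi : DGA_morphism phi)
  (L : 'M[K]_n) (M : 'M[A1]_n) : phi (LamA L M) = LamA L (map_mx phi M).
Proof.
rewrite /LamA phi_sum //; apply: eq_bigr => u _; rewrite phi_sum //; apply: eq_bigr => v _.
by rewrite mxE phiZ.
Qed.

Lemma fchoice (I : Type) (T : Type) (P : I -> T -> Prop) :
  (forall i, exists x, P i x) -> exists f : I -> T, forall i, P i (f i).
Proof.
move=> h; exists (fun i => proj1_sig (constructive_indefinite_description _ (h i))).
by move=> i; case: (constructive_indefinite_description _ (h i)).
Qed.

Section GrCohom.
Variables (K : fieldType) (n : nat) (W : int -> 'M[K]_n).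
Hypothesis hW : filtration W.
Variables (A1 A2 : DGA K) (phi : A1 -> A2).
Hypothesis hphi : DGA_morphism phi.

Definition FF (A : DGA K) k p (M : 'M[A]_n) := in_tens A p (Sk W k) M.
Local Notation Phi := (map_mx phi).

Lemma grH0inj k M : Hinj phi 0 -> FF k 0 M -> FF k.+1 1 (dmx M) -> FF k.+1 0 (Phi M) ->
  FF k.+1 0 M.
Proof.
move=> hH hM hdM hPM; have [r [e [L [he hv hd]]]] := decompS hW k.
have := decompA hd hM.
suff -> : \sum_i tens A1 (LamA (L i) M) (e i) = 0 by rewrite subr0.
apply: big1 => i _.
suff -> : LamA (L i) M = 0 by apply: tens0l.
apply: hH.
  split; first by apply: LamA_homog; apply: (in_tens_hmx hM).
  by rewrite -LamA_dmx; apply: (LamA_vanish (hv i) hdM).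
by rewrite /coboundary (LamA_map hphi); apply: (LamA_vanish (hv i) hPM).
Qed.

Lemma grHinjS k p M : Hinj phi p.+1 -> FF k p.+1 M -> FF k.+1 p.+2 (dmx M) ->
  (exists Q R, FF k p Q /\ FF k.+1 p.+1 R /\ Phi M = dmx Q + R) ->
  exists N, FF k p N /\ FF k.+1 p.+1 (M - dmx N).
Proof.
move=> hH hM hdM [Q [R [hQ [hR hPM]]]]; have [r [e [L [he hv hd]]]] := decompS hW k.
have hy : forall i, exists y, homog A1 p y /\ LamA (L i) M = dga_d A1 y.
  move=> i; apply: hH.
    split; first by apply: LamA_homog; apply: (in_tens_hmx hM).
    by rewrite -LamA_dmx; apply: (LamA_vanish (hv i) hdM).
  exists (LamA (L i) Q); split; first by apply: LamA_homog; apply: (in_tens_hmx hQ).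
  rewrite (LamA_map hphi) hPM LamA_D (LamA_vanish (hv i) hR) addr0.
  by rewrite LamA_dmx.
have [y hy'] := fchoice hy.
exists (\sum_i tens A1 (y i) (e i)); split.
  by apply: in_tens_sum => i _; apply: in_tens1; [case: (hy' i)|apply: he].
rewrite dmx_sum.
have -> : \sum_i dmx (tens A1 (y i) (e i)) = \sum_i tens A1 (LamA (L i) M) (e i).
  by apply: eq_bigr => i _; rewrite dmx_tens; case: (hy' i) => _ ->.
exact: decompA hd hM.
Qed.

Lemma grH0surj k M : Hsurj phi 0 -> FF k 0 M -> FF k.+1 1 (dmx M) ->
  exists N, [/\ FF k 0 N, FF k.+1 1 (dmx N) & FF k.+1 0 (Phi N - M)].
Proof.
move=> hH hM hdM; have [r [e [L [he hv hd]]]] := decompS hW k.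
have hy : forall i, exists y, cocycle A1 0 y /\ phi y = LamA (L i) M.
  move=> i; have [y [hy1 hy2]] : exists y, cocycle A1 0 y /\
      coboundary A2 0 (phi y - LamA (L i) M).
    apply: hH; split; first by apply: LamA_homog; apply: (in_tens_hmx hM).
    by rewrite -LamA_dmx; apply: (LamA_vanish (hv i) hdM).
  by exists y; split => //; apply/eqP; rewrite -subr_eq0; apply/eqP.
have [y hy'] := fchoice hy.
exists (\sum_i tens A1 (y i) (e i)); split.
- by apply: in_tens_sum => i _; apply: in_tens1; [case: (hy' i) => -[]|apply: he].
- rewrite dmx_sum big1; first by apply: in_tens0.
  by move=> i _; rewrite dmx_tens; case: (hy' i) => -[_ ->] _; apply: tens0l.
- rewrite (map_sum hphi).
  have -> : \sum_i Phi (tens A1 (y i) (e i)) = \sum_i tens A2 (LamA (L i) M) (e i).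
    by apply: eq_bigr => i _; rewrite (map_tens hphi); case: (hy' i) => _ ->.
  by rewrite -opprB; apply: in_tensN; apply: decompA hd hM.
Qed.

Lemma grHsurjS k p M : Hsurj phi p.+1 -> FF k p.+1 M -> FF k.+1 p.+2 (dmx M) ->
  exists N, [/\ FF k p.+1 N, FF k.+1 p.+2 (dmx N) &
    exists Q, FF k p Q /\ FF k.+1 p.+1 (Phi N - M - dmx Q)].
Proof.
move=> hH hM hdM; have [r [e [L [he hv hd]]]] := decompS hW k.
have hy : forall i, exists yq, cocycle A1 p.+1 yq.1 /\ homog A2 p yq.2 /\
    phi yq.1 - LamA (L i) M = dga_d A2 yq.2.
  move=> i; have [y [hy1 [q [hq1 hq2]]]] : exists y, cocycle A1 p.+1 y /\
      coboundary A2 p.+1 (phi y - LamA (L i) M).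
    apply: hH; split; first by apply: LamA_homog; apply: (in_tens_hmx hM).
    by rewrite -LamA_dmx; apply: (LamA_vanish (hv i) hdM).
  by exists (y, q).
have [yq hy'] := fchoice hy.
exists (\sum_i tens A1 (yq i).1 (e i)); split.
- by apply: in_tens_sum => i _; apply: in_tens1; [case: (hy' i) => -[]|apply: he].
- rewrite dmx_sum big1; first by apply: in_tens0.
  by move=> i _; rewrite dmx_tens; case: (hy' i) => -[_ ->] _; apply: tens0l.
exists (\sum_i tens A2 (yq i).2 (e i)); split.
  by apply: in_tens_sum => i _; apply: in_tens1; [case: (hy' i) => _ []|apply: he].
rewrite (map_sum hphi) dmx_sum.
have -> : \sum_i Phi (tens A1 (yq i).1 (e i)) =
    \sum_i tens A2 (LamA (L i) M) (e i) + \sum_i dmx (tens A2 (yq i).2 (e i)).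
  rewrite -big_split; apply: eq_bigr => i _; rewrite (map_tens hphi) dmx_tens.
  transitivity (tens A2 (LamA (L i) M + dga_d A2 (yq i).2) (e i)); last exact: tensDl.
  by case: (hy' i) => _ [_ <-]; rewrite addrC subrK.
by rewrite addrAC addrK -opprB; apply: in_tensN; apply: decompA hd hM.
Qed.

End GrCohom.

Section FBasics.
Variables (K : fieldType) (n : nat) (W : int -> 'M[K]_n).
Hypothesis hW : filtration W.
Variable (A : DGA K).
Implicit Types (M N : 'M[A]_n).
Local Notation F := (FF W (A:=A)).

Lemma F0 k p : F k p 0. Proof. exact: in_tens0. Qed.
Lemma FD k p M N : F k p M -> F k p N -> F k p (M + N). Proof. exact: in_tensD. Qed.
Lemma FN k p M : F k p M -> F k p (- M). Proof. exact: in_tensN. Qed.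
Lemma FB k p M N : F k p M -> F k p N -> F k p (M - N). Proof. exact: in_tensB. Qed.
Lemma Fd k p M : F k p M -> F k p.+1 (dmx M). Proof. exact: in_tens_dmx. Qed.
Lemma Fmono k l p M : (k <= l)%N -> F l p M -> F k p M.
Proof. by move=> h; apply: in_tens_mono => f; apply: Sk_mono. Qed.
Lemma FM k l p q M N : F k p M -> F l q N -> F (k + l) (p + q) (M *m N).
Proof. by apply: in_tensM => f g; apply: SkM. Qed.
Lemma Fh k p M : F k p M -> hmx p M. Proof. exact: in_tens_hmx. Qed.
Lemma Fbound : exists L : nat, forall k p M, (L <= k)%N -> F k p M -> M = 0.
Proof.
have [L hL] := Sk_bound hW; exists L => k p M hk hM; apply: (@in_tens_zero _ A n p).
by apply: in_tens_mono hM => f; apply: hL.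
Qed.

Lemma scalemxN1 M : scalemxK A ((-1) ^+ 1) M = - M.
Proof. by apply/matrixP=> i j; rewrite !mxE expr1 scaleN1r. Qed.

Lemma MC_iff (h2 : (2%:R : K) != 0) M :
  scalemxK A (2%:R^-1) (gbracket 1 1 M M) = M *m M.
Proof.
rewrite /gbracket muln1 scalemxN1 opprK; apply/matrixP=> i j; rewrite !mxE.
by rewrite -mulr2n -scaler_nat scalerA mulVf // scale1r.
Qed.
End FBasics.

Inductive zx := zA of nat | z0 | zD of zx & zx | zN of zx.

Section ZEv.
Variables (V : zmodType) (env : seq V).
Fixpoint zev (e : zx) : V :=
  match e with
  | zA i => nth 0 env i
  | z0 => 0
  | zD a b => zev a + zev b
  | zN a => - zev a
  end.
End ZEv.
Arguments zev {V} env e.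

Fixpoint zco (e : zx) (j : nat) : int :=
  match e with
  | zA i => if i == j then 1 else 0
  | z0 => 0
  | zD a b => zco a j + zco b j
  | zN a => - zco a j
  end.

Lemma zevE (V : zmodType) (env : seq V) e :
  zev env e = \sum_(j < size env) (nth 0 env j) *~ zco e j.
Proof.
elim: e => [i||a IHa b IHb|a IHa] /=.
- case: (ltnP i (size env)) => hi.
    rewrite (bigD1 (Ordinal hi)) //= eqxx mulr1z big1 ?addr0 // => j hj.
    by case: eqP => [h|]; [case/eqP: hj; apply: val_inj; rewrite /= h|rewrite mulr0z].
  rewrite nth_default // big1 // => j _; case: eqP => [h|]; last by rewrite mulr0z.
  by move: (ltn_ord j); rewrite -h ltnNge hi.
- by rewrite big1 // => j _; rewrite mulr0z.
- by rewrite IHa IHb -big_split; apply: eq_bigr => j _; rewrite mulrzDr.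
- by rewrite IHa -sumrN; apply: eq_bigr => j _; rewrite mulrNz.
Qed.

Lemma zsound (V : zmodType) (env : seq V) N e1 e2 : size env = N ->
  all (fun j => zco e1 j == zco e2 j) (iota 0 N) ->
  zev env e1 = zev env e2.
Proof.
move=> <- /allP h; rewrite !zevE; apply: eq_bigr => j _.
have hj : (j : nat) \in iota 0 (size env) by rewrite mem_iota /= add0n ltn_ord.
by have /eqP -> := h j hj.
Qed.

Ltac zlookup x env :=
  match env with
  | ?y :: _ => let _ := constr:(ltac:(unify x y; exact I) : True) in constr:(O)
  | _ :: ?env' => let k := zlookup x env' in constr:(S k)
  end.

Ltac zmem x env :=
  match env with
  | ?y :: _ => let _ := constr:(ltac:(unify x y; exact I) : True) in constr:(true)
  | _ :: ?env' => zmem x env'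
  | _ => constr:(false)
  end.

Ltac zlen env :=
  lazymatch env with
  | _ :: ?env' => let k := zlen env' in constr:(S k)
  | _ => constr:(O)
  end.

Ltac zatoms t env :=
  lazymatch t with
  | (?a + ?b)%R => let env := zatoms a env in zatoms b env
  | (- ?a)%R => zatoms a env
  | 0%R => env
  | _ => let b := zmem t env in
         lazymatch b with true => env | false => constr:(t :: env) end
  end.

Ltac zreify t env :=
  lazymatch t with
  | (?a + ?b)%R => let ea := zreify a env in let eb := zreify b env in constr:(zD ea eb)
  | (- ?a)%R => let ea := zreify a env in constr:(zN ea)
  | 0%R => constr:(z0)
  | _ => let k := zlookup t env in constr:(zA k)
  end.

Ltac zsolve0 :=
  lazymatch goal with
  | |- @eq ?T ?L ?R =>
    let env := zatoms L (@nil T) in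
    let env := zatoms R env in
    let eL := zreify L env in
    let eR := zreify R env in
    let N := zlen env in
    change (zev env eL = zev env eR); apply: (@zsound _ env N); [reflexivity|vm_compute; reflexivity]
  end.

Ltac zsolve := rewrite ?(mulmx1, mul1mx, mulmx0, mul0mx, mulmxDl, mulmxDr, mulmxBl, mulmxBr, mulNmx, mulmxN, mulmxA, opprK, opprD, opprB); zsolve0.




Lemma subBB (V : zmodType) (p q r s : V) : (p - q) - (r - s) = (p - r) - (q - s).
Proof. by rewrite !opprB addrACA [RHS]addrACA [- r + _]addrC. Qed.

Section Main.
Variables (K : fieldType) (n : nat) (W : int -> 'M[K]_n).
Hypothesis hW : filtration W.

Definition Mobj (A : DGA K) (w : 'M[A]_n) := FF W 1 1 w /\ dmx w + w *m w = 0.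
Definition Mhom (A : DGA K) (w1 w2 a : 'M[A]_n) :=
  (exists N, FF W 1 0 N /\ a = 1%:M + N) /\ dmx a + w1 *m a - a *m w2 = 0.

Lemma hom_d (A : DGA K) (w1 w2 a : 'M[A]_n) : Mhom w1 w2 a -> dmx a = a *m w2 - w1 *m a.
Proof. by case=> _ /eqP; rewrite subr_eq0 => /eqP <-; rewrite addrK. Qed.

Lemma hom_h (A : DGA K) (w1 w2 a : 'M[A]_n) : Mhom w1 w2 a -> hmx 0 a.
Proof. by case=> -[N [hN ->]] _; apply: hmxD; [apply: hmx1|apply: Fh hN]. Qed.

Variables (A1 A2 : DGA K) (phi : A1 -> A2).
Hypothesis hphi : DGA_morphism phi.
Hypotheses (H0i : Hinj phi 0) (H0s : Hsurj phi 0) (H1i : Hinj phi 1) (H1s : Hsurj phi 1)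
  (H2i : Hinj phi 2).
Local Notation Phi := (map_mx phi).

Lemma obj_d (A : DGA K) (x : 'M[A]_n) : Mobj x -> dmx x = - (x *m x).
Proof. by case=> _ /eqP; rewrite addr_eq0 => /eqP. Qed.
Lemma obj_h (A : DGA K) (x : 'M[A]_n) : Mobj x -> hmx 1 x.
Proof. by case=> h _; apply: Fh h. Qed.


Lemma faithful x y a a' : Mobj x -> Mobj y -> Mhom x y a -> Mhom x y a' -> Phi a = Phi a' -> a = a'.
Proof.
move=> [hx _] [hy _] ha ha' hP.
suff hk : forall k, FF W k.+1 0 (a - a').
  have [L hL] := @Fbound _ _ _ hW A1.
  by apply/eqP; rewrite -subr_eq0; apply/eqP; apply: (hL L.+1 0) => //.
elim=> [|k IH].
  case: ha => -[N [hN ->]] _; case: ha' => -[N' [hN' ->]] _.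
  by rewrite opprD addrACA subrr add0r; apply: FB.
apply: (grH0inj hW hphi H0i IH).
- rewrite dmxB (hom_d ha) (hom_d ha') subBB -mulmxBl -mulmxBr.
  apply: FB.
    by have := FM IH hy; rewrite addn1.
  by have := FM hx IH; rewrite add1n.
- by rewrite mapB //  hP subrr; apply: F0.
Qed.

End Main.

Section Full.
Variables (K : fieldType) (n : nat) (W : int -> 'M[K]_n).
Hypothesis hW : filtration W.
Variables (A1 A2 : DGA K) (phi : A1 -> A2).
Hypothesis hphi : DGA_morphism phi.
Hypotheses (H0i : Hinj phi 0) (H0s : Hsurj phi 0) (H1i : Hinj phi 1) (H1s : Hsurj phi 1)
  (H2i : Hinj phi 2).
Local Notation Phi := (map_mx phi).

Lemma dE (A : DGA K) (x y a : 'M[A]_n) : Mobj W x -> Mobj W y -> hmx 0 a ->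
  dmx (dmx a + x *m a - a *m y) = - (x *m (dmx a + x *m a - a *m y) + (dmx a + x *m a - a *m y) *m y).
Proof.
move=> hx hy ha.
rewrite dmxB dmxD dmxK (dmxM1 _ (obj_h hx)) (dmxM0 _ ha) (obj_d hx) (obj_d hy).
zsolve.
Qed.


Lemma Fmap k p M : FF W k p M -> FF W k p (Phi M).
Proof. exact: in_tens_map. Qed.

Lemma full x y b : Mobj W x -> Mobj W y -> Mhom W (Phi x) (Phi y) b ->
  exists a, Mhom W x y a /\ Phi a = b.
Proof.
move=> hx hy hb.
pose E (a : 'M[A1]_n) := dmx a + x *m a - a *m y.
have hx1 := hx.1; have hy1 := hy.1.
suff hk : forall k, exists a, [/\ exists N, FF W 1 0 N /\ a = 1%:M + N,
    FF W k.+1 1 (E a) & FF W k.+1 0 (Phi a - b)].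
  have [L hL] := @Fbound _ _ _ hW A1; have [L2 hL2] := @Fbound _ _ _ hW A2.
  have [a [ha hE hu]] := hk (maxn L L2); exists a; split; first split=> //.
    by apply: (hL (maxn L L2).+1 1) => //; apply: leq_trans (leq_maxl _ _) _.
  by apply/eqP; rewrite -subr_eq0; apply/eqP; apply: (hL2 (maxn L L2).+1 0) => //;
    apply: leq_trans (leq_maxr _ _) _.
elim=> [|k [a [[Na [hNa ea]] he hu]]].
  exists 1%:M; split; first by exists 0; split; [apply: F0|rewrite addr0].
    by rewrite /E dmx1 mulmx1 mul1mx add0r; apply: FB.
  case: hb => -[Nb [hNb ->]] _; rewrite map1 // opprD addrA subrr add0r.
  by apply: FN.
have ha0 : hmx 0 a by rewrite ea; apply: hmxD; [apply: hmx1|apply: Fh hNa].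
set e := E a; set u := Phi a - b.
have hde : FF W k.+2 2 (dmx e).
  rewrite /e /E (dE hx hy ha0); apply: FN; apply: FD.
    by have := FM hx1 he; rewrite add1n.
  by have := FM he hy1; rewrite addn1.
have hPe : Phi e = dmx u + (Phi x *m u - u *m Phi y).
  have hb0 := hb.2.
  rewrite /e /E !(mapB hphi) (mapD hphi) !(mapM hphi) (map_dmx hphi) /u.
  rewrite -[LHS]subr0 -hb0 !dmxB; zsolve.
have hR : FF W k.+2 1 (Phi x *m u - u *m Phi y).
  apply: FB; first by have := FM (Fmap hx1) hu; rewrite add1n.
  by have := FM hu (Fmap hy1); rewrite addn1.
have [N [hN heN]] := grHinjS hW hphi H1i he hde (ex_intro _ u (ex_intro _ _ (conj hu (conj hR hPe)))).
set u' := u - Phi N.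
have hu' : FF W k.+1 0 u' by apply: FB => //; apply: Fmap.
have hdu' : FF W k.+2 1 (dmx u').
  have -> : dmx u' = Phi (e - dmx N) - (Phi x *m u - u *m Phi y).
    by rewrite /u' dmxB -(map_dmx hphi) (mapB hphi) hPe; zsolve.
  by apply: FB => //; apply: Fmap.
have [N0 [hN0 hdN0 hPN0]] := grH0surj hW hphi H0s hu' hdu'.
exists (a - N - N0); split.
- exists (Na - N - N0); split; last by rewrite ea; zsolve.
  by apply: FB; [apply: FB|]; rewrite // ; apply: Fmono hN0 || apply: Fmono hN.
- have -> : E (a - N - N0) = (e - dmx N) - dmx N0 - (x *m N + x *m N0) + (N *m y + N0 *m y).
    by rewrite /E /e /E !dmxB; zsolve.
  apply: FD; first apply: FB; first apply: FB => //.
  + by apply: FD; [have := FM hx1 hN | have := FM hx1 hN0]; rewrite add1n.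
  + by apply: FD; [have := FM hN hy1 | have := FM hN0 hy1]; rewrite addn1.
- have -> : Phi (a - N - N0) - b = - (Phi N0 - u').
    by rewrite /u' /u !(mapB hphi); zsolve.
  by apply: FN.
Qed.


Lemma esurj z : Mobj W z -> exists x, Mobj W x /\ exists c, Mhom W (Phi x) z c.
Proof.
move=> hz; have hz1 := hz.1.
pose MC (x : 'M[A1]_n) := dmx x + x *m x.
pose E (x : 'M[A1]_n) (c : 'M[A2]_n) := dmx c + Phi x *m c - c *m z.
suff hk : forall k, exists x c, [/\ FF W 1 1 x, exists N, FF W 1 0 N /\ c = 1%:M + N,
    FF W k.+1 2 (MC x) & FF W k.+1 1 (E x c)].
  have [L hL] := @Fbound _ _ _ hW A1; have [L2 hL2] := @Fbound _ _ _ hW A2.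
  have [x [c [hx hc hm he]]] := hk (maxn L L2); exists x; split.
    split=> //; apply: (hL (maxn L L2).+1 2) => //; apply: leqW; apply: leq_maxl.
  exists c; split; first exact: hc.
  apply: (hL2 (maxn L L2).+1 1) => //.
  by apply: leqW; apply: leq_maxr.
elim=> [|k [x [c [hx [N [hN ec]] hm he]]]].
  exists 0, 1%:M; split; first exact: F0.
  - by exists 0; split; [apply: F0|rewrite addr0].
  - by rewrite /MC dmx0 mul0mx addr0; apply: F0.
  - by rewrite /E dmx1 map0 // mul0mx mul1mx add0r sub0r; apply: FN.
have hxh : hmx 1 x by apply: Fh hx.
have hPxh : hmx 1 (Phi x) by apply: Fh (Fmap hx).
have hch : hmx 0 c by rewrite ec; apply: hmxD; [apply: hmx1|apply: Fh hN].
have [mc [hmc emc]] : exists mc, FF W k.+1 2 mc /\ mc = MC x by exists (MC x).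
have [e [he' ee]] : exists e, FF W k.+1 1 e /\ e = E x c by exists (E x c).
have hdx : dmx x = mc - x *m x by rewrite emc /MC addrK.
have hdmc : FF W k.+2 3 (dmx mc).
  have -> : dmx mc = mc *m x - x *m mc.
    by rewrite {1}emc /MC dmxD dmxK (dmxM1 _ hxh) add0r hdx; zsolve.
  apply: FB; first by have := FM hmc hx; rewrite addn1.
  by have := FM hx hmc; rewrite add1n.
have hPmc : Phi mc = dmx (Phi x) + Phi x *m Phi x.
  by rewrite emc /MC (mapD hphi) (mapM hphi) (map_dmx hphi).
have hdPx : dmx (Phi x) = Phi mc - Phi x *m Phi x by rewrite hPmc addrK.
have hdc : dmx c = e - Phi x *m c + c *m z by rewrite ee /E; zsolve.
have hde : dmx e = Phi mc *m c - Phi x *m e - e *m z.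
  rewrite {1}ee /E dmxB dmxD (dmxM1 _ hPxh) (dmxM0 _ hch) dmxK (obj_d hz) hdPx hdc.
  zsolve.
have [R eR] : exists R, R = Phi x *m e + e *m z - Phi mc *m N by exists (Phi x *m e + e *m z - Phi mc *m N).
have hPmcR : Phi mc = dmx e + R.
  rewrite eR hde ec; zsolve.
have hR : FF W k.+2 2 R.
  rewrite eR; apply: FB; first apply: FD.
  + by have := FM (Fmap hx) he'; rewrite add1n.
  + by have := FM he' hz1; rewrite addn1.
  + by have := FM (Fmap hmc) hN; rewrite addn1.
have [Y [hY hmcY]] := grHinjS hW hphi H2i hmc hdmc
  (ex_intro _ e (ex_intro _ R (conj he' (conj hR hPmcR)))).
have [e' [he'' ee']] : exists e', FF W k.+1 1 e' /\ e' = e - Phi Y.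
  by exists (e - Phi Y); split=> //; apply: FB => //; apply: Fmap.
have hde' : FF W k.+2 2 (dmx e').
  have -> : dmx e' = Phi (mc - dmx Y) - R.
    by rewrite ee' dmxB -(map_dmx hphi) (mapB hphi) hPmcR; zsolve.
  by apply: FB => //; apply: Fmap.
have [X0 [hX0 hdX0 [Q0 [hQ0 hR0]]]] := grHsurjS hW hphi H1s he'' hde'.
have hY1 : FF W 1 1 Y by apply: Fmono hY.
have hX01 : FF W 1 1 X0 by apply: Fmono hX0.
have hQ01 : FF W 1 0 Q0 by apply: Fmono hQ0.
exists (x - Y - X0), (c + Q0); split.
- by apply: FB => //; apply: FB.
- by exists (N + Q0); split; [apply: FD|rewrite ec addrA].
- have -> : MC (x - Y - X0) = (mc - dmx Y) - dmx X0 +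
      (x *m (- Y - X0) + (- Y - X0) *m x + (- Y - X0) *m (- Y - X0)).
    by rewrite /MC emc /MC !dmxB; zsolve.
  have hYX : FF W k.+1 1 (- Y - X0) by apply: FB => //; apply: FN.
  apply: FD; first by apply: FB.
  apply: FD; first apply: FD.
  + by have := FM hx hYX; rewrite add1n.
  + by have := FM hYX hx; rewrite addn1.
  + by have := FM hYX hYX; apply: (Fmono hW); lia.
- have -> : E (x - Y - X0) (c + Q0) = - (Phi X0 - e' - dmx Q0) +
      (Phi x *m Q0 - Q0 *m z - (Phi Y + Phi X0) *m (N + Q0)).
    rewrite /E !(mapB hphi) dmxD ee' ee /E ec; zsolve.
  apply: FD; first by apply: FN.
  apply: FB; first apply: FB.
  + by have := FM (Fmap hx) hQ0; rewrite add1n.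
  + by have := FM hQ0 hz1; rewrite addn1.
  + have hNQ : FF W 1 0 (N + Q0) by apply: FD.
    have hPYX : FF W k.+1 1 (Phi Y + Phi X0) by apply: FD; apply: Fmap.
    by have := FM hPYX hNQ; rewrite addn1.
Qed.

End Full.

Section Cat.
Variables (K : fieldType) (n : nat) (W : int -> 'M[K]_n).
Hypothesis hW : filtration W.

Section OneA.
Variable A : DGA K.
Implicit Types (x y z a b : 'M[A]_n).

Lemma Fobj_iff (h2 : (2%:R : K) != 0) x : Fobj W x <-> Mobj W x.
Proof. by rewrite /Fobj /Mobj (MC_iff h2). Qed.

Lemma Fhom_iff x y a : Fhom W x y a <-> Mhom W x y a.
Proof. by []. Qed.

Lemma hom_id x : Mobj W x -> Mhom W x x 1%:M.
Proof.
move=> _; split; first by exists 0; split; [apply: F0|rewrite addr0].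
by rewrite dmx1 mulmx1 mul1mx add0r subrr.
Qed.

Lemma hom_comp x y z a b : Mhom W x y a -> Mhom W y z b -> Mhom W x z (a *m b).
Proof.
move=> ha hb; split.
  case: ha => -[N [hN ->]] _; case: hb => -[N' [hN' ->]] _.
  exists (N + N' + N *m N'); split; last by zsolve.
  by apply: FD; [apply: FD|]; rewrite //; apply: (Fmono hW) (FM hN hN').
rewrite (dmxM0 _ (hom_h ha)) (hom_d ha) (hom_d hb); zsolve.
Qed.

Lemma hom_inv x y a : Mhom W x y a ->
  exists a', [/\ Mhom W y x a', a *m a' = 1%:M & a' *m a = 1%:M].
Proof.
move=> ha; have [[N [hN ea]] _] := ha.
have [P [hP eaP]] : exists P, FF W 1 0 P /\ a = 1%:M - P.
  by exists (- N); split; [apply: FN|rewrite ea opprK].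
have [pw [pw0 pwS]] : exists pw : nat -> 'M[A]_n, pw 0%N = 1%:M /\ forall m, pw m.+1 = P *m pw m.
  by exists (fun m => iter m (fun M => P *m M) (1%:M : 'M[A]_n)).
have pwC m : pw m *m P = pw m.+1.
  elim: m => [|m IH]; first by rewrite pwS pw0 mul1mx mulmx1.
  by rewrite pwS -mulmxA IH -pwS.
have pwF m : FF W m.+1 0 (pw m.+1).
  elim: m => [|m IH]; first by rewrite pwS pw0 mulmx1.
  by rewrite pwS; have := FM hP IH.
have [L hL] := @Fbound _ _ _ hW A.
have pwL : pw L.+1 = 0 by apply: (hL L.+1 0) => //.
have [g [g0 gS]] : exists g : nat -> 'M[A]_n, g 0%N = 0 /\ forall m, g m.+1 = g m + pw m.
  by exists (fun m => \sum_(j < m) pw j); split; [rewrite big_ord0|move=> m; rewrite big_ord_recr].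
have gl m : (1%:M - P) *m g m = 1%:M - pw m.
  elim: m => [|m IH]; first by rewrite g0 mulmx0 pw0 subrr.
  rewrite gS mulmxDr IH pwS; zsolve.
have gr m : g m *m (1%:M - P) = 1%:M - pw m.
  elim: m => [|m IH]; first by rewrite g0 mul0mx pw0 subrr.
  rewrite gS mulmxDl IH mulmxBr mulmx1 pwC; zsolve.
have h1 : a *m g L.+1 = 1%:M by rewrite eaP gl pwL subr0.
have h2 : g L.+1 *m a = 1%:M by rewrite eaP gr pwL subr0.
have gF m : FF W 1 0 (g m.+1 - 1%:M).
  elim: m => [|m IH]; first by rewrite gS g0 pw0 add0r subrr; apply: F0.
  have -> : g m.+2 - 1%:M = (g m.+1 - 1%:M) + pw m.+1 by rewrite gS; zsolve.
  by apply: FD => //; apply: (Fmono hW) (pwF m).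
exists (g L.+1); split => //; split.
  by exists (g L.+1 - 1%:M); split; [apply: gF|zsolve].
have hd : dmx a *m g L.+1 + a *m dmx (g L.+1) = 0.
  by rewrite -(dmxM0 _ (hom_h ha)) h1 dmx1.
have e1 : dmx (g L.+1) = - (g L.+1 *m dmx a *m g L.+1).
  rewrite -[dmx (g L.+1)]mul1mx -h2 -mulmxA.
  have -> : a *m dmx (g L.+1) = - (dmx a *m g L.+1).
    by apply/eqP; rewrite -addr_eq0 addrC hd.
  by rewrite mulmxN mulmxA.
rewrite e1 (hom_d ha) mulmxBr mulmxBl !mulmxA h2 mul1mx.
rewrite -[g L.+1 *m x *m a *m g L.+1]mulmxA h1 mulmx1; zsolve.
Qed.

End OneA.
End Cat.

Lemma two_nz b : (2%:R : Kfld b) != 0.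
Proof. by case: b => /=; rewrite pnatr_eq0. Qed.

Section MainThm.
Variables (K : fieldType) (n : nat) (W : int -> 'M[K]_n).
Hypothesis hW : filtration W.
Variables (A1 A2 : DGA K) (phi : A1 -> A2).
Hypothesis hphi : DGA_morphism phi.
Hypotheses (H0i : Hinj phi 0) (H0s : Hsurj phi 0) (H1i : Hinj phi 1) (H1s : Hsurj phi 1)
  (H2i : Hinj phi 2).
Hypothesis h2 : (2%:R : K) != 0.
Local Notation Phi := (map_mx phi).

Lemma map_obj x : Mobj W x -> Mobj W (Phi x).
Proof.
case=> hx hmc; split; first exact: in_tens_map.
by rewrite -(map_dmx hphi) -(mapM hphi) -(mapD hphi) hmc map0.
Qed.

Lemma map_hom x y a : Mhom W x y a -> Mhom W (Phi x) (Phi y) (Phi a).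
Proof.
case=> -[N [hN ea]] he; split.
  by exists (Phi N); split; [apply: in_tens_map|rewrite ea (mapD hphi) map1].
by rewrite -(map_dmx hphi) -!(mapM hphi) -(mapD hphi) -(mapB hphi) he map0.
Qed.

Lemma main_equiv : is_equivalence (C := Fcat A1 W) (D := Fcat A2 W)
    (fun w : 'M[A1]_n => map_mx phi w)
    (fun _ _ (a : 'M[A1]_n) => map_mx phi a).
Proof.
have oE (A : DGA K) (x : 'M[A]_n) : Fobj W x <-> Mobj W x := Fobj_iff W h2 x.
split.
  split => /=.
  - by move=> x /oE hx; apply/oE; apply: map_obj.
  - by move=> x y f _ _; apply: map_hom.
  - by move=> x _; apply: map1.
  - by move=> x y z f g _ _ _ _ _; apply: mapM.
have fa := faithful hW hphi H0i.
have fu := full hW hphi H0s H1i.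
have es := esurj hW hphi H1s H2i.
have preGE : forall z : 'M[A2]_n, exists p : 'M[A1]_n * 'M[A2]_n, Mobj W z -> Mobj W p.1 /\ Mhom W (Phi p.1) z p.2.
  move=> z; case: (classic (Mobj W z)) => hz; last by exists (0, 0).
  by have [x [hx [c hc]]] := es z hz; exists (x, c).
have [GE hGE] := fchoice preGE.
pose Go z := (GE z).1; pose eps z := (GE z).2.
have preEi : forall z : 'M[A2]_n, exists e' : 'M[A2]_n, Mobj W z ->
    [/\ Mhom W z (Phi (Go z)) e', eps z *m e' = 1%:M & e' *m eps z = 1%:M].
  move=> z; case: (classic (Mobj W z)) => hz; last by exists 0.
  have [_ he] := hGE z hz; have [e' [h1 h2' h3]] := hom_inv hW he.
  by exists e'.
have [Ei hEi] := fchoice preEi.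
have preGM : forall t : 'M[A2]_n * 'M[A2]_n * 'M[A2]_n, exists a : 'M[A1]_n, Mobj W t.1.1 -> Mobj W t.1.2 -> Mhom W t.1.1 t.1.2 t.2 ->
    Mhom W (Go t.1.1) (Go t.1.2) a /\ Phi a = eps t.1.1 *m t.2 *m Ei t.1.2.
  move=> [[z z'] g] /=.
  case: (classic (Mobj W z /\ Mobj W z' /\ Mhom W z z' g)); last first.
    by move=> hn; exists 0 => hz hz' hg; case: hn.
  move=> [hz [hz' hg]].
  have [hGz he] := hGE z hz; have [hGz' _] := hGE z' hz'.
  have [hi _ _] := hEi z' hz'.
  have hb : Mhom W (Phi (Go z)) (Phi (Go z')) (eps z *m g *m Ei z').
    by apply: (hom_comp hW) hi; apply: (hom_comp hW) hg.
  by have [a [ha hPa]] := fu _ _ _ hGz hGz' hb; exists a.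
have [GM hGM] := fchoice preGM.
have preET : forall x : 'M[A1]_n, exists a : 'M[A1]_n, Mobj W x ->
    Mhom W x (Go (Phi x)) a /\ Phi a = Ei (Phi x).
  move=> x; case: (classic (Mobj W x)) => hx; last by exists 0.
  have hPx := map_obj hx.
  have [hG _] := hGE _ hPx; have [hi _ _] := hEi _ hPx.
  by have [a [ha hPa]] := fu _ _ _ hx hG hi; exists a.
have [ET hET] := fchoice preET.
exists Go, (fun z z' g => GM (z, z', g)), ET, eps; split.
- split => /=.
  + by move=> z /oE hz; apply/oE; case: (hGE z hz).
  + by move=> z z' g /oE hz /oE hz' hg; case: (hGM (z, z', g) hz hz' hg).
  + move=> z /oE hz; have [hGz _] := hGE z hz.
    have [hg hPg] := hGM (z, z, 1%:M) hz hz (hom_id hz).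
    apply: (fa _ _ _ _ hGz hGz hg (hom_id hGz)).
    by rewrite hPg (map1 n hphi) /= mulmx1; case: (hEi z hz).
  + move=> z z' z'' g g' /oE hz /oE hz' /oE hz'' hg hg'.
    have [hGz _] := hGE z hz; have [hGz'' _] := hGE z'' hz''.
    have [hgg hPgg] := hGM (z, z'', g *m g') hz hz'' (hom_comp hW hg hg').
    have [h1 hP1] := hGM (z, z', g) hz hz' hg.
    have [h2'' hP2] := hGM (z', z'', g') hz' hz'' hg'.
    apply: (fa _ _ _ _ hGz hGz'' hgg (hom_comp hW h1 h2'')).
    rewrite hPgg (mapM hphi) hP1 hP2 /=.
    have [_ _ e3] := hEi z' hz'.
    by rewrite !mulmxA -[_ *m Ei z' *m eps z']mulmxA e3 mulmx1.
- split => /=.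
  + move=> x /oE hx; have [ha _] := hET x hx; split => //.
    by have [e' [he' h1 h3]] := hom_inv hW ha; exists e'.
  + move=> x y f /oE hx /oE hy hf.
    have hPx := map_obj hx; have hPy := map_obj hy.
    have [hGx _] := hGE _ hPx; have [hGy _] := hGE _ hPy.
    have [hex hPex] := hET x hx; have [hey hPey] := hET y hy.
    have [hg hPg] := hGM (Phi x, Phi y, Phi f) hPx hPy (map_hom hf).
    apply: (fa _ _ _ _ hx hGy (hom_comp hW hf hey) (hom_comp hW hex hg)).
    rewrite !(mapM hphi) hPey hPex hPg /=.
    have [_ _ e3] := hEi _ hPx.
    by rewrite !mulmxA e3 mul1mx.
- split => /=.
  + move=> z /oE hz; have [_ he] := hGE z hz; split => //.
    by have [hi h1 h3] := hEi z hz; exists (Ei z).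
  + move=> z z' g /oE hz /oE hz' hg.
    have [_ hP] := hGM (z, z', g) hz hz' hg.
    have [_ _ e3] := hEi z' hz'.
    by rewrite hP -!mulmxA e3 mulmx1.
Qed.

End MainThm.

Unset Implicit Arguments.

Theorem corollary10p4 (b : bool) (n : nat) (W : int -> 'M[Kfld b]_n)
  (A1 A2 : DGA (Kfld b)) (phi : A1 -> A2) :
  filtration W ->
  cohom_connected A1 -> cohom_connected A2 ->
  DGA_morphism phi ->
  Hinj phi 0 -> Hsurj phi 0 ->
  Hinj phi 1 -> Hsurj phi 1 ->
  Hinj phi 2 ->
  is_equivalence (C := Fcat A1 W) (D := Fcat A2 W)
    (fun w : 'M[A1]_n => map_mx phi w)
    (fun _ _ (a : 'M[A1]_n) => map_mx phi a).
Proof.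
move=> hW _ _ hphi H0i H0s H1i H1s H2i.
exact: (main_equiv hW hphi H0i H0s H1i H1s H2i (two_nz b)).
Qed.
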